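(* Let $E_1,\dots,E_{k+1}$ be a $\mathbb{Q}$-nef partition of a complete fan $\Sigma$ and $V=\{v_1,\dots,v_k\}$ an amenable collection of vectors subordinate to it. Then the monomials of the Laurent polynomial $\phi_V^*w$ correspond (as points of $M\cap M_V$) exactly to all possible sums $p+\sum_{s=1}^\ell u_s$ with $p\in E_{k+1}$ and $u_1,\dots,u_\ell\in E_1\cup\dots\cup E_k$ (repetitions allowed, $\ell\ge0$) such that $\langle v_i,p+\sum_{s=1}^\ell u_s\rangle=0$ for all $1\le i\le k$.
   Context: $M$ lattice of rank $n$, $N=\mathrm{Hom}(M,\mathbb{Z})$; $\Sigma$ complete fan in $M_\mathbb{R}$, $\Sigma[1]$ primitive ray generators. $\mathbb{Q}$-nef partition: ordered partition $\Sigma[1]=E_1\sqcup\dots\sqcup E_{k+1}$ with convex rational $\Sigma$-piecewise linear functions $\varphi_i$, $\varphi_i(\rho)=\delta_{ij}$ on $E_j$. Amenable collection: $\langle v_i,\rho\rangle=-1$ on $E_i$, $\ge0$ on $E_j$ for $i<j\le k+1$, $=0$ on $E_j$ for $j<i$. $M_V=\{u\in M_\mathbb{R}:\langle v_i,u\rangle=0\ \forall i\}$. Fix $a_\rho\in\mathbb{C}^\times$, extend $V$ to a basis $v_1,\dots,v_n$ of $N$, coordinates $x_j$ on $(\mathbb{C}^\times)^n$ with $x^\rho=\prod_jx_j^{\langle v_j,\rho\rangle}$. $X^\vee:\ \sum_{\rho\in E_i}a_\rho x^\rho=1$ ($1\le i\le k$), $w=\sum_{\rho\in E_{k+1}}a_\rho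 x^\rho$. Recursively $f_i=\sum_{\rho\in E_i}a_\rho\prod_{j<i}f_j^{\langle v_j,\rho\rangle}\prod_{j>k}x_j^{\langle v_j,\rho\rangle}$, and $\phi_V(x_{k+1},\dots,x_n)=(f_1,\dots,f_k,x_{k+1},\dots,x_n)$. A monomial $\prod_{j>k}x_j^{m_j}$ corresponds to the unique $u\in M\cap M_V$ with $\langle v_j,u\rangle=m_j$ for $j>k$. *)

(* Defs.v *)
From HB Require Import structures.
From mathcomp Require Import all_boot all_order all_algebra.
From mathcomp Require Import boolp classical_sets reals.
Set Implicit Arguments.
Unset Strict Implicit.
Unset Printing Implicit Defensive.
Import Order.TTheory GRing.Theory Num.Theory.
Local Open Scope ring_scope.
Local Open Scope classical_set_scope.

(* Lattices.  M = Z^n as row vectors 'rV[int]_n, N = Hom(M,Z) = Z^n with  *)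
(* the standard pairing <v,u> = sum_i v_i u_i.  M_R = 'rV[R]_n.           *)
Definition pair {n} (v u : 'rV[int]_n) : int := \sum_(i < n) v 0 i * u 0 i.

Section Real.
Variable R : realType.
Variable n : nat.

Definition pairR (y x : 'rV[R]_n) : R := \sum_(i < n) y 0 i * x 0 i.

Definition toR (u : 'rV[int]_n) : 'rV[R]_n := map_mx (fun z : int => z%:~R) u.

Definition cone (S : seq 'rV[int]_n) : set 'rV[R]_n :=
  [set x | exists l : 'I_(size S) -> R,
     (forall i, 0 <= l i) /\ x = \sum_(i < size S) l i *: toR (nth 0 S i)].

Definition strongly_convex (C : set 'rV[R]_n) : Prop :=
  forall x, C x -> C (- x) -> x = 0.

Definition is_face (T C : set 'rV[R]_n) : Prop :=
  exists y : 'rV[R]_n, (forall x, C x -> 0 <= pairR y x) /\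
    T = C `&` [set x | pairR y x = 0].

Definition is_fan (Sigma : seq (seq 'rV[int]_n)) : Prop :=
  [/\ forall s, s \in Sigma -> strongly_convex (cone s),
      forall s T, s \in Sigma -> is_face T (cone s) ->
        exists2 t, t \in Sigma & cone t = T &
      forall s t, s \in Sigma -> t \in Sigma ->
        is_face (cone s `&` cone t) (cone s) /\
        is_face (cone s `&` cone t) (cone t)].

Definition complete_fan (Sigma : seq (seq 'rV[int]_n)) : Prop :=
  is_fan Sigma /\ forall x : 'rV[R]_n, exists2 s, s \in Sigma & cone s x.

(* rho is a primitive ray generator of Sigma, i.e. an element of Sigma[1] *)
Definition ray_gen (Sigma : seq (seq 'rV[int]_n)) (rho : 'rV[int]_n) : Prop :=
  [/\ rho != 0,
      forall (c : int) (w : 'rV[int]_n), rho = c *: w -> `|c| = 1 &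
      exists2 s, s \in Sigma & cone s = cone [:: rho]].

Definition rat_pl (Sigma : seq (seq 'rV[int]_n)) (phi : 'rV[R]_n -> R) : Prop :=
  forall s, s \in Sigma -> exists q : 'rV[rat]_n,
    forall x, cone s x -> phi x = pairR (map_mx (fun a : rat => ratr a) q) x.

Definition convex_fun (phi : 'rV[R]_n -> R) : Prop :=
  forall (x y : 'rV[R]_n) (t : R), 0 <= t -> t <= 1 ->
    phi (t *: x + (1 - t) *: y) <= t * phi x + (1 - t) * phi y.

(* Q-nef partition: the rays Sigma[1] (listed without repetition in [rays])
   are partitioned into E_1,...,E_{k+1}, with rho in E_(part rho)
   (0-based: part rho : 'I_k.+1), and there are convex rational
   Sigma-piecewise linear phi_i with phi_i(rho) = delta_ij on E_j. *)
Definition qnef_partition (k : nat) (Sigma : seq (seq 'rV[int]_n))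
  (rays : seq 'rV[int]_n) (part : 'rV[int]_n -> 'I_k.+1) : Prop :=
  [/\ uniq rays,
      forall rho, rho \in rays <-> ray_gen Sigma rho &
      exists phi : 'I_k.+1 -> 'rV[R]_n -> R,
        forall i, [/\ rat_pl Sigma (phi i), convex_fun (phi i) &
          forall rho, rho \in rays ->
            phi i (toR rho) = ((i == part rho) : nat)%:R]].
End Real.

(* amenable collection v_1..v_k (0-based v : 'I_k -> N) subordinate to
   the partition E_j = [rho in rays | part rho == j] *)
Definition amenable {n k : nat} (rays : seq 'rV[int]_n)
  (part : 'rV[int]_n -> 'I_k.+1) (v : 'I_k -> 'rV[int]_n) : Prop :=
  forall (i : 'I_k) rho, rho \in rays ->
    [/\ (part rho : nat) = i -> pair (v i) rho = -1,
        (i < part rho)%N -> 0 <= pair (v i) rho &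
        (part rho < i)%N -> pair (v i) rho = 0].

(* Laurent polynomials with integer coefficients over an exponent group X, *)
(* represented as formal lists of terms (coefficient, exponent); the      *)
(* coefficient of x^e is the sum of the coefficients of the terms with    *)
(* exponent e.                                                            *)
Definition lpoly (X : zmodType) := seq (int * X).
Definition lcoef {X : zmodType} (p : lpoly X) (e : X) : int :=
  \sum_(t <- p | t.2 == e) t.1.
Definition lone {X : zmodType} : lpoly X := [:: (1, 0)].
Definition lmul {X : zmodType} (p q : lpoly X) : lpoly X :=
  [seq (s.1 * t.1, s.2 + t.2) | s <- p, t <- q].
Definition lexp {X : zmodType} (p : lpoly X) (e : nat) : lpoly X :=
  iter e (lmul p) lone.
Definition lprod {X : zmodType} (s : seq (lpoly X)) : lpoly X := foldr lmul lone s.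
Definition lsum {X : zmodType} (s : seq (lpoly X)) : lpoly X := flatten s.

Section LG.
Variables (k m : nat).
Local Notation n := (k + m)%N.
(* basis v_1..v_n of N: rows of B; V = first k rows *)
Variable B : 'M[int]_n.
Variables (rays : seq 'rV[int]_n) (part : 'rV[int]_n -> 'I_k.+1).
Local Notation r := (size rays).

Definition vb (j : nat) : 'rV[int]_n :=
  if insub j is Some jj then row jj B else 0.

Definition Vcoll (i : 'I_k) : 'rV[int]_n := row (lshift m i) B.

(* coordinates of u in x_{k+1},...,x_n: (<v_j,u>)_{j > k} *)
Definition xproj (u : 'rV[int]_n) : 'rV[int]_m :=
  \row_(j < m) pair (row (rshift k j) B) u.

(* Exponent group: a-exponents (one formal variable a_rho per ray)
   followed by x-exponents (x_{k+1},...,x_n). *)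
Definition X := 'rV[int]_(r + m).

Definition avar (rho : 'rV[int]_n) : lpoly X :=
  [:: (1, row_mx (\row_(j < r) (((j : nat) == index rho rays) : nat)%:R) 0)].
Definition xmono (e : 'rV[int]_m) : lpoly X := [:: (1, row_mx 0 e)].

(* sum_{rho in E_i} a_rho * prod_{j < size prev} prev_j^{<v_j,rho>} * x^rho *)
Definition fnext (prev : seq (lpoly X)) (i : nat) : lpoly X :=
  lsum [seq lmul (avar rho)
          (lmul (lprod [seq lexp (nth [::] prev j) `|pair (vb j) rho|%N
                        | j <- iota 0 (size prev)])
                (xmono (xproj rho)))
       | rho <- rays & (part rho : nat) == i].

(* fseq i = [:: f_1; ...; f_i] *)
Fixpoint fseq (i : nat) : seq (lpoly X) :=
  if i is i'.+1 then rcons (fseq i') (fnext (fseq i') i') else [::].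

(* phi_V^* w = sum_{rho in E_{k+1}} a_rho prod_{j<=k} f_j^{<v_j,rho>} x^rho *)
Definition pullback_w : lpoly X := fnext (fseq k) k.

(* the monomial x^e occurs in P (with nonzero coefficient in Z[a_rho]) *)
Definition occurs (P : lpoly X) (e : 'rV[int]_m) : Prop :=
  exists a : 'rV[int]_r, lcoef P (row_mx a e) != 0.
End LG.

(* Main.v *)
Require Import Defs.
From HB Require Import structures.
From mathcomp Require Import all_boot all_order all_algebra.
From mathcomp Require Import boolp classical_sets reals.
From mathcomp Require Import zify.
Import Order.TTheory GRing.Theory Num.Theory.
Local Open Scope ring_scope.
Set Implicit Arguments. Unset Strict Implicit. Unset Printing Implicit Defensive.

Section Generic.
Variables r m : nat.
Local Notation XX := 'rV[int]_(r + m).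
Local Notation V := 'rV[int]_m.

Definition exS (P : lpoly XX) (e : V) : Prop := exists2 t, t \in P & rsubmx t.2 = e.
Definition posc (P : lpoly XX) : bool := all (fun t => 0 < t.1) P.

Lemma rsubmxD (a b : XX) : rsubmx (a + b) = rsubmx a + rsubmx b.
Proof. by apply/matrixP => i j; rewrite !mxE. Qed.

Lemma exS_lmul P Q e : exS (lmul P Q) e <-> exists a b, [/\ exS P a, exS Q b & e = a + b].
Proof.
split.
  case=> t /allpairsP [[s u] [/= hs hu ->]] <- /=.
  by exists (rsubmx s.2), (rsubmx u.2); split; [exists s|exists u|rewrite rsubmxD].
case=> a [b [[s hs <-] [u hu <-] ->]].
exists (s.1 * u.1, s.2 + u.2); last by rewrite rsubmxD.
by apply/allpairsP; exists (s, u).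
Qed.

Lemma exS_lsum Ls e : exS (lsum Ls) e <-> exists2 P, P \in Ls & exS P e.
Proof.
split.
  by case=> t /flattenP [P hP ht] <-; exists P => //; exists t.
by case=> P hP [t ht <-]; exists t => //; apply/flattenP; exists P.
Qed.

Lemma exS_lone e : exS lone e <-> e = 0.
Proof.
split; first by case=> t; rewrite inE => /eqP -> <- /=; apply/matrixP=> i j; rewrite !mxE.
move=> ->; exists (1, 0); first by rewrite inE.
by apply/matrixP=> i j; rewrite !mxE.
Qed.

Fixpoint NS (A : V -> Prop) (c : nat) (e : V) : Prop :=
  if c is c'.+1 then exists a b, [/\ A a, NS A c' b & e = a + b] else e = 0.

Lemma exS_lexp P c e : exS (lexp P c) e <-> NS (exS P) c e.
Proof.
elim: c e => [|c IH] e; first exact: exS_lone.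
have -> : lexp P c.+1 = lmul P (lexp P c) by [].
rewrite exS_lmul.
split; case=> a [b [ha hb ->]]; exists a, b; split => //; exact/IH.
Qed.

Fixpoint SumS (A : nat -> V -> Prop) (c : nat -> nat) (s : seq nat) (e : V) : Prop :=
  if s is j :: s' then exists a b, [/\ NS (A j) (c j) a, SumS A c s' b & e = a + b]
  else e = 0.

Lemma exS_lprod (G : nat -> lpoly XX) c s e :
  exS (lprod [seq lexp (G j) (c j) | j <- s]) e <-> SumS (fun j => exS (G j)) c s e.
Proof.
elim: s e => [|j s IH] e /=; first exact: exS_lone.
rewrite exS_lmul.
split; case=> a [b [ha hb ->]]; exists a, b; split => //;
  by [apply/exS_lexp | apply/IH].
Qed.

Lemma NS_ext (A A' : V -> Prop) c e : (forall x, A x <-> A' x) -> NS A c e -> NS A' c e.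
Proof.
move=> hA; elim: c e => [|c IH] e //=.
by case=> a [b [ha hb ->]]; exists a, b; split => //; [apply/hA | apply: IH].
Qed.

Lemma SumS_ext A A' c c' s e :
  (forall j, j \in s -> c j = c' j /\ forall x, A j x <-> A' j x) ->
  SumS A c s e -> SumS A' c' s e.
Proof.
elim: s e => [|j s IH] e //= h.
case=> a [b [ha hb ->]]; exists a, b; split.
- have [<- hA] := h j (mem_head _ _); exact: NS_ext ha.
- by apply: IH hb => j' hj'; apply: h; rewrite inE hj' orbT.
- done.
Qed.

Lemma posc_lmul P Q : posc P -> posc Q -> posc (lmul P Q).
Proof.
move=> /allP hP /allP hQ; apply/allP => t /allpairsP [[s u] [/= hs hu ->]] /=.
exact: mulr_gt0 (hP _ hs) (hQ _ hu).
Qed.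

Lemma posc_lone : posc lone. Proof. by []. Qed.

Lemma posc_lexp P c : posc P -> posc (lexp P c).
Proof. by move=> hP; elim: c => [|c IH] //; have -> : lexp P c.+1 = lmul P (lexp P c) by []; apply: posc_lmul. Qed.

Lemma posc_lprod Ls : all posc Ls -> posc (lprod Ls).
Proof. by elim: Ls => [|P Ls IH] //= /andP [hP hL]; apply: posc_lmul => //; apply: IH. Qed.

Lemma posc_lsum Ls : all posc Ls -> posc (lsum Ls).
Proof.
elim: Ls => [|P Ls IH] //= /andP [hP hL].
by rewrite /lsum /= /posc all_cat; apply/andP; split => //; apply: IH.
Qed.

Lemma occursE P e : posc P ->
  (exists a : 'rV[int]_r, lcoef P (row_mx a e) != 0) <-> exS P e.
Proof.
move=> hP; split.
  case=> a h; apply: contrapT => hn; move/eqP: h; apply.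
  rewrite /lcoef big_seq_cond big1 // => t /andP [ht /eqP h2].
  by case: hn; exists t => //; rewrite h2 row_mxKr.
case=> t ht <-; exists (lsubmx t.2); rewrite hsubmxK.
have : 0 < lcoef P t.2; last by move=> h; rewrite gt_eqF.
move: hP ht; rewrite /lcoef; elim: P => [|s P IH] //= /andP [hs hP].
rewrite inE big_cons; case: (eqVneq t s) => [->|ne] /=.
  rewrite eqxx => _; apply: ltr_pwDl => //.
  by rewrite big_seq_cond sumr_ge0 // => x /andP [hx _]; move/allP: hP => /(_ x hx) /ltW.
move=> ht; have := IH hP ht; case: ifP => // _ h.
by apply: ltr_wpDl => //; apply: ltW.
Qed.
End Generic.

Section Spec.
Variables k m : nat.
Variable B : 'M[int]_(k + m).
Variable rays : seq 'rV[int]_(k + m).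
Variable part : 'rV[int]_(k + m) -> 'I_k.+1.
Local Notation r := (size rays).
Local Notation V := 'rV[int]_m.
Local Notation W := 'rV[int]_(k + m).
Local Notation fs := (fseq B rays part).
Local Notation fn := (@fnext k m B rays part).

Lemma size_fseq i : size (fs i) = i.
Proof. by elim: i => //= i IH; rewrite size_rcons IH. Qed.

Lemma nth_fseq q b j : (j < q)%N -> nth [::] (fs q) j = nth [::] (fs (q + b)) j.
Proof.
move=> hj; elim: b => [|b IH]; first by rewrite addn0.
by rewrite addnS /= nth_rcons size_fseq IH ltn_addr.
Qed.

Lemma fseq_last q : nth [::] (fs q.+1) q = fn (fs q) q.
Proof. by rewrite /= nth_rcons size_fseq ltnn eqxx. Qed.

Lemma posc_fnext prev i : all (posc (r:=r) (m:=m)) prev -> posc (fn prev i).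
Proof.
move=> hp; apply: posc_lsum; apply/allP => P /mapP [rho _ ->].
apply: posc_lmul; first by rewrite /posc /= ?andbT.
apply: posc_lmul; last by rewrite /posc /= ?andbT.
apply: posc_lprod; apply/allP => Q /mapP [j _ ->]; apply: posc_lexp.
case: (ltnP j (size prev)) => hj; first by move/allP: hp; apply; exact: mem_nth.
by rewrite nth_default.
Qed.

Lemma posc_fseq i : all (posc (r:=r) (m:=m)) (fs i).
Proof.
by elim: i => //= i IH; rewrite all_rcons IH andbT; apply: posc_fnext.
Qed.

Lemma posc_pullback : posc (pullback_w B rays part).
Proof. exact: posc_fnext (posc_fseq k). Qed.

Lemma exS_avar rho e : exS (avar rays rho) e <-> e = 0.
Proof.
split; first by case=> t; rewrite inE => /eqP -> <- /=; rewrite row_mxKr.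
by move=> ->; exists (avar rays rho)`_0 => //=; [rewrite inE | rewrite row_mxKr].
Qed.

Lemma exS_xmono x e : exS (xmono rays x) e <-> e = x.
Proof.
split; first by case=> t; rewrite inE => /eqP -> <- /=; rewrite row_mxKr.
by move=> ->; exists (xmono rays x)`_0 => //=; [rewrite inE | rewrite row_mxKr].
Qed.

Lemma exS_fnext prev i e : exS (fn prev i) e <->
  exists rho, [/\ rho \in rays, (part rho : nat) == i &
    exists b, SumS (fun j => exS (nth [::] prev j)) (fun j => `|pair (vb B j) rho|%N)
                (iota 0 (size prev)) b /\ e = 0 + (b + xproj B rho)].
Proof.
rewrite /fnext exS_lsum; split.
  case=> P /mapP [rho]; rewrite mem_filter => /andP [hp hr] -> /exS_lmul [a [bx [/exS_avar -> + ->]]].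
  move=> /exS_lmul [b [x [hb /exS_xmono -> ->]]].
  exists rho; split => //; exists b; split => //.
  by move/exS_lprod: hb.
case=> rho [hr hp [b [hb ->]]].
eexists; first by apply/mapP; exists rho => //; rewrite mem_filter hp hr.
apply/exS_lmul; exists 0, (b + xproj B rho); split => //; first exact/exS_avar.
apply/exS_lmul; exists b, (xproj B rho); split => //; last exact/exS_xmono.
exact/exS_lprod.
Qed.

Lemma vbE (j : 'I_k) : vb B j = Vcoll B j.
Proof.
rewrite /vb /Vcoll insubT; first by rewrite ltn_addr.
by move=> h; congr row; apply: val_inj.
Qed.

Lemma pairD n (v a b : 'rV[int]_n) : pair v (a + b) = pair v a + pair v b.
Proof. by rewrite /pair -big_split /=; apply: eq_bigr => i _; rewrite mxE mulrDr. Qed.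

Lemma pair0 n (v : 'rV[int]_n) : pair v 0 = 0.
Proof. by rewrite /pair big1 // => i _; rewrite mxE mulr0. Qed.

Lemma pair_sum n (v : 'rV[int]_n) (s : seq 'rV[int]_n) :
  pair v (\sum_(x <- s) x) = \sum_(x <- s) pair v x.
Proof. by elim: s => [|x s IH]; rewrite ?big_nil ?pair0 // !big_cons pairD IH. Qed.

Lemma xprojD a b : xproj B (a + b) = xproj B a + xproj B b.
Proof. by apply/matrixP => i j; rewrite !mxE pairD. Qed.

Lemma xproj0 : xproj B 0 = 0.
Proof. by apply/matrixP => i j; rewrite !mxE pair0. Qed.

Lemma xproj_sum (s : seq W) : xproj B (\sum_(x <- s) x) = \sum_(x <- s) xproj B x.
Proof. by elim: s => [|x s IH]; rewrite ?big_nil ?xproj0 // !big_cons xprojD IH. Qed.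

Hypothesis amen : amenable rays part (Vcoll B).

Definition Good (c : nat -> int) (e : V) := exists t : seq W,
  [/\ all (fun x => (x \in rays) && (part x != ord_max)) t,
      e = xproj B (\sum_(x <- t) x) &
      forall j : 'I_k, pair (Vcoll B j) (\sum_(x <- t) x) = c j].

Lemma Good_add c c' a b : Good c a -> Good c' b -> Good (fun j => c j + c' j) (a + b).
Proof.
case=> t [ht -> hc]; case=> t' [ht' -> hc']; exists (t ++ t'); split.
- by rewrite all_cat ht ht'.
- by rewrite big_cat xprojD.
- by move=> j; rewrite big_cat pairD hc hc'.
Qed.

Lemma Good_ext (c c' : nat -> int) e : (forall j : 'I_k, c j = c' j) -> Good c e -> Good c' e.
Proof. by move=> h [t [ht he hc]]; exists t; split => // j; rewrite hc h. Qed.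

Lemma Good0 : Good (fun _ => 0) 0.
Proof. by exists [::]; split => //; rewrite ?big_nil ?xproj0 // => j; rewrite pair0. Qed.

Lemma Good_ray rho : rho \in rays -> (part rho < k)%N ->
  Good (fun j => pair (vb B j) rho) (xproj B rho).
Proof.
move=> hr hp; exists [:: rho]; split.
- rewrite /= hr /= andbT; apply/eqP => h; by move: hp; rewrite h /= ltnn.
- by rewrite big_seq1.
- by move=> j; rewrite big_seq1 vbE.
Qed.

Lemma NS_good q (A : V -> Prop) c e :
  (forall x, A x -> Good (fun j => - ((j == q)%N%:Z)) x) ->
  NS A c e -> Good (fun j => - (((j == q) * c)%N%:Z)) e.
Proof.
move=> hA; elim: c e => [|c IH] e /=.
  by move=> ->; apply: Good_ext Good0 => j; rewrite muln0.
case=> a [b [ha hb ->]]; apply: Good_ext (Good_add (hA _ ha) (IH _ hb)) => j.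
by case: ((j : nat) == q) => /=; rewrite ?mul0n ?mul1n //; lia.
Qed.

Lemma SumS_good (A : nat -> V -> Prop) c s e : uniq s ->
  (forall q, q \in s -> forall x, A q x -> Good (fun j => - ((j == q)%N%:Z)) x) ->
  SumS A c s e -> Good (fun j => - (((j \in s) * c j)%N%:Z)) e.
Proof.
elim: s e => [|q s IH] e /=.
  by move=> _ _ ->; apply: Good_ext Good0 => j; rewrite mul0n.
move=> /andP [hq hu] hA [a [b [ha hb ->]]].
have Ga := NS_good (hA q (mem_head _ _)) ha.
have Gb := IH _ hu (fun q' hq' => hA q' (mem_behead (s:=q::s) hq')) hb.
apply: Good_ext (Good_add Ga Gb) => j; rewrite inE.
case: (eqVneq (j : nat) q) => [->|ne] /=; first by rewrite (negbTE hq) mul1n mul0n; lia.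
by rewrite mul0n; lia.
Qed.

Lemma fsound q : (q < k)%N -> forall e, exS (nth [::] (fs k) q) e ->
  Good (fun j => - ((j == q)%N%:Z)) e.
Proof.
elim/ltn_ind: q => q IH hq e.
have -> : nth [::] (fs k) q = nth [::] (fs q.+1) q by rewrite (@nth_fseq q.+1 (k - q.+1)%N q) // subnKC.
rewrite fseq_last.
case/exS_fnext => rho [hr /eqP hp [b [hb ->]]].
rewrite size_fseq in hb.
have hb' : SumS (fun j => exS (nth [::] (fs k) j)) (fun j => `|pair (vb B j) rho|%N) (iota 0 q) b.
  apply: SumS_ext hb => j; rewrite mem_iota add0n => /andP [_ hj]; split => //.
  by rewrite (@nth_fseq q (k - q)%N j) // subnKC // ltnW.
have Gb : Good (fun j => - (((j \in iota 0 q) * `|pair (vb B j) rho|)%N%:Z)) b.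
  apply: SumS_good (iota_uniq _ _) _ hb' => q'; rewrite mem_iota add0n => /andP [_ hq'].
  exact: IH q' hq' (ltn_trans hq' hq).
have hpk : (part rho < k)%N by rewrite hp.
apply: Good_ext (Good_add Good0 (Good_add Gb (Good_ray hr hpk))).
move=> j; rewrite mem_iota add0n /= vbE.
have [h1 h2 h3] := amen j hr.
case: (ltngtP j q) => hjq.
- have h := h2 (eq_ind_r (fun x => (j < x)%N) hjq hp).
  by rewrite mul1n gez0_abs //; lia.
- by rewrite mul0n h3 ?hp //; lia.
- by rewrite mul0n h1 ?hp //= hjq eqxx; lia.
Qed.

Local Notation A := (fun j => exS (nth [::] (fs k) j)).

Lemma fnode q rho b : (q < k)%N -> rho \in rays -> (part rho : nat) = q ->
  SumS A (fun j => `|pair (vb B j) rho|%N) (iota 0 q) b -> A q (b + xproj B rho).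
Proof.
move=> hq hr hp hb /=.
have -> : nth [::] (fs k) q = nth [::] (fs q.+1) q by rewrite (@nth_fseq q.+1 (k - q.+1)%N q) // subnKC.
rewrite fseq_last; apply/exS_fnext; exists rho; split => //; first by rewrite hp.
exists b; split; last by rewrite add0r.
rewrite size_fseq; apply: SumS_ext hb => j; rewrite mem_iota add0n => /andP [_ hj]; split => //.
by rewrite (@nth_fseq q (k - q)%N j) // subnKC // ltnW.
Qed.

Lemma SumS_zero (A' : nat -> V -> Prop) s : SumS A' (fun _ => 0%N) s 0.
Proof. by elim: s => [|j s IH] //=; exists 0, 0; rewrite addr0. Qed.

Lemma SumS_ins (A' : nat -> V -> Prop) c s j a e : uniq s -> j \in s -> A' j a ->
  SumS A' c s e -> SumS A' (fun j' => ((j == j') + c j')%N) s (a + e).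
Proof.
elim: s c e => [|j0 s IH] c e //= /andP [hj0 hu]; rewrite inE => hj ha.
case=> a0 [b0 [h0 h1 ->]].
case: (eqVneq j j0) => [ej|ne].
  subst j0; exists (a + a0), b0; split; first by rewrite add1n; exists a, a0.
  - apply: SumS_ext h1 => j' hj'; split => //.
    by case: eqP => // ej; move: hj0; rewrite ej hj'.
  - by rewrite addrA.
move: hj; rewrite (negbTE ne) /= => hj.
exists a0, (a + b0); split; first by rewrite add0n.
- exact: IH hu hj ha h1.
- by rewrite addrCA.
Qed.

Lemma SumS_list (A' : nat -> V -> Prop) s (L : seq (nat * V)) : uniq s ->
  (forall x, x \in L -> x.1 \in s /\ A' x.1 x.2) ->
  SumS A' (fun j => count (fun x => x.1 == j) L) s (\sum_(x <- L) x.2).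
Proof.
move=> hu; elim: L => [|x L IH] hL; first by rewrite big_nil; apply: SumS_zero.
rewrite big_cons; have [hx1 hx2] := hL x (mem_head _ _).
have := SumS_ins hu hx1 hx2 (IH (fun y hy => hL y (mem_behead (s:=x::L) hy))).
by apply: SumS_ext => j' _; split.
Qed.

Lemma min_part (t : seq W) : t != [::] ->
  exists2 rho, rho \in t & forall x, x \in t -> (part rho <= part x)%N.
Proof.
elim: t => [|y t IH] // _.
case: (altP (t =P [::])) => [->|ne].
  by exists y; rewrite ?inE // => x; rewrite inE => /eqP ->.
have [z hz hmin] := IH ne.
case: (leqP (part y) (part z)) => h.
  exists y; first exact: mem_head.
  move=> x; rewrite inE => /orP [/eqP -> //|hx]; exact: leq_trans h (hmin x hx).
exists z; first by rewrite inE hz orbT.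
move=> x; rewrite inE => /orP [/eqP -> |hx]; [exact: ltnW | exact: hmin].
Qed.

Lemma extract (F : seq (nat * V)) (c : nat -> nat) :
  (forall j, (c j <= count (fun x => x.1 == j) F)%N) ->
  exists F1, exists F2, perm_eq F (F1 ++ F2) /\
    forall j, count (fun x => x.1 == j) F1 = c j.
Proof.
elim: F c => [|x F IH] c hc.
  by exists [::], [::]; split => // j; have := hc j; rewrite leqn0 => /eqP.
case: (posnP (c x.1)) => hx.
  have hc' : forall j, (c j <= count (fun x => x.1 == j) F)%N.
    move=> j; have := hc j; rewrite /=; case: eqP => [ej|] //.
    by rewrite -ej hx.
  have [F1 [F2 [hp hcnt]]] := IH c hc'.
  exists F1, (x :: F2); split => //.
  apply: perm_trans (_ : perm_eq (x :: F) (x :: F1 ++ F2)) _; first by rewrite perm_cons.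
  by rewrite perm_sym (perm_catCA F1 [:: x] F2).
have hc' : forall j, (c j - (x.1 == j) <= count (fun x => x.1 == j) F)%N.
  by move=> j; have := hc j; rewrite /=; lia.
have [F1 [F2 [hp hcnt]]] := IH (fun j => c j - (x.1 == j))%N hc'.
exists (x :: F1), F2; split; first by rewrite /= perm_cons.
move=> j /=; rewrite hcnt; case: eqP => [<-|] /=; lia.
Qed.

Lemma forest (t : seq W) (F : seq (nat * V)) (d : nat -> nat) :
  all (fun x => (x \in rays) && (part x != ord_max)) t ->
  (forall x, x \in F -> (x.1 < k)%N /\ A x.1 x.2) ->
  (forall j : 'I_k, pair (Vcoll B j) (\sum_(x <- t) x) =
      (count (fun x => x.1 == (j : nat)) F)%:Z - (d j)%:Z) ->
  exists L : seq (nat * V), [/\ forall x, x \in L -> (x.1 < k)%N /\ A x.1 x.2,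
     forall j, (j < k)%N -> count (fun x => x.1 == j) L = d j &
     \sum_(x <- L) x.2 = xproj B (\sum_(x <- t) x) + \sum_(x <- F) x.2].
Proof.
have [n] := ubnP (size t); elim: n t F d => // n IH t F d hn ht hF hinv.
case: (altP (t =P [::])) => [et|ne].
  subst t; exists F; split => //; last by rewrite big_nil xproj0 add0r.
  move=> j hj; have := hinv (Ordinal hj); rewrite big_nil pair0 /=; lia.
have [rho hr hmin] := min_part ne.
have /andP [hrr hrm] := allP ht rho hr.
set q := (part rho : nat).
have hqk : (q < k)%N.
  have hne : q != k by apply: contra hrm => /eqP h; apply/eqP/val_inj.
  by have := ltn_ord (part rho); rewrite ltnS leq_eqVlt (negbTE hne).
have hsum : \sum_(x <- t) x = rho + \sum_(x <- rem rho t) x.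
  by rewrite (perm_big _ (perm_to_rem hr)) big_cons.
set c := fun j => if (j < q)%N then `|pair (vb B j) rho|%N else 0%N.
have hcj : forall j : 'I_k, (c j)%:Z - pair (Vcoll B j) rho = ((q == j) : nat)%:Z.
  move=> j; have [h1 h2 h3] := amen j hrr; rewrite /c vbE.
  case: ifP => hjq.
    have -> : (q == j) = false by apply/eqP; lia.
    by rewrite gez0_abs ?h2 //=; lia.
  case: (ltngtP q j) => hqj.
    by rewrite h3 //=; lia.
    by rewrite hqj in hjq.
  by rewrite h1 /=; [lia|exact: hqj].
have hc : forall j, (c j <= count (fun x => x.1 == j) F)%N.
  move=> j; rewrite /c; case: ifP => // hjq.
  have hjk : (j < k)%N := ltn_trans hjq hqk.
  have [h1 h2 h3] := amen (Ordinal hjk) hrr.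
  have hp := h2 hjq; have hi := hinv (Ordinal hjk).
  have hrest : 0 <= pair (Vcoll B (Ordinal hjk)) (\sum_(x <- rem rho t) x).
    rewrite pair_sum big_seq sumr_ge0 // => x hx.
    have hxt := mem_rem hx.
    have /andP [hxr _] := allP ht x hxt.
    have [_ g2 _] := amen (Ordinal hjk) hxr.
    by apply: g2; apply: leq_trans hjq (hmin x hxt).
  move: hi; rewrite hsum pairD /=.
  have -> : vb B j = Vcoll B (Ordinal hjk) by rewrite -vbE.
  rewrite -lez_nat gez0_abs // => hh; apply: le_trans (_ : _ <= pair (Vcoll B (Ordinal hjk)) rho + pair (Vcoll B (Ordinal hjk)) (\sum_(x <- rem rho t) x)) _; first by rewrite lerDl.
  by rewrite hh lerBlDr lerDl.
have [F1 [F2 [hperm hcnt]]] := extract hc.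
set y := \sum_(x <- F1) x.2 + xproj B rho.
have hF12 : forall x, x \in F1 ++ F2 -> x \in F by move=> x; rewrite -(perm_mem hperm).
have hF1 : forall x, x \in F1 -> x.1 \in iota 0 q /\ A x.1 x.2.
  move=> x hx; have hx' : x \in F1 ++ F2 by rewrite mem_cat hx.
  have [hx1 hx2] := hF x (hF12 x hx').
  split => //; rewrite mem_iota add0n /=.
  have : (0 < count (fun z => z.1 == x.1) F1)%N by rewrite -has_count; apply/hasP; exists x.
  by rewrite hcnt /c; case: ifP.
have hy : A q y.
  rewrite /y; apply: fnode => //.
  have := @SumS_list A (iota 0 q) F1 (iota_uniq 0 q) hF1.
  apply: SumS_ext => j hj; split => //.
  by rewrite hcnt /c; move: hj; rewrite mem_iota add0n => /andP [_ ->].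
have hsz : (size (rem rho t) < n)%N.
  have hpos : (0 < size t)%N by rewrite lt0n size_eq0.
  by rewrite size_rem //; move: hn hpos; case: (size t).
have ht' : all (fun x => (x \in rays) && (part x != ord_max)) (rem rho t).
  by apply/allP => x hx; apply: (allP ht); apply: mem_rem hx.
have hF' : forall x, x \in (q, y) :: F2 -> (x.1 < k)%N /\ A x.1 x.2.
  move=> x; rewrite inE => /orP [/eqP -> //|hx].
  by apply: hF; apply: hF12; rewrite mem_cat hx orbT.
have hinv' : forall j : 'I_k, pair (Vcoll B j) (\sum_(x <- rem rho t) x) =
      (count (fun x => x.1 == (j : nat)) ((q, y) :: F2))%:Z - (d j)%:Z.
  move=> j; have := hinv j; have := hcj j.
  rewrite hsum pairD (permP hperm) count_cat hcnt /=.
  lia.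
have [L [hL1 hL2 hL3]] := IH (rem rho t) ((q, y) :: F2) d hsz ht' hF' hinv'.
exists L; split => //.
rewrite hL3 big_cons (perm_big _ hperm) big_cat /= hsum xprojD /y.
by rewrite !addrA; congr (_ + _); rewrite addrC !addrA.
Qed.

Lemma inj_pairs (u w : W) : B \in unitmx ->
  (forall i : 'I_(k + m), pair (row i B) u = pair (row i B) w) -> u = w.
Proof.
move=> hB h.
have e : B *m u^T = B *m w^T.
  apply/matrixP => i j; rewrite !mxE (ord1 j).
  have := h i; rewrite /pair => hi.
  rewrite (eq_bigr (fun l => row i B 0 l * u 0 l)); last by move=> l _; rewrite !mxE.
  rewrite hi; apply: eq_bigr => l _; by rewrite !mxE.
apply: trmx_inj; by rewrite -(mulKmx hB u^T) e mulKmx.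
Qed.

Lemma main_iff (u : W) : B \in unitmx ->
    ((forall i : 'I_k, pair (Vcoll B i) u = 0) /\
     occurs (pullback_w B rays part) (xproj B u))
    <->
    (exists p : W, exists s : seq W,
       [/\ p \in rays, part p = ord_max,
           all (fun x => (x \in rays) && (part x != ord_max)) s,
           u = p + \sum_(x <- s) x &
           forall i : 'I_k, pair (Vcoll B i) u = 0]).
Proof.
move=> hB; split.
  case=> h0 /(occursE _ posc_pullback) /exS_fnext [p [hp /eqP hpk [b [hb hu]]]].
  rewrite size_fseq in hb.
  have Gb : Good (fun j => - (((j \in iota 0 k) * `|pair (vb B j) p|)%N%:Z)) b.
    apply: SumS_good (iota_uniq _ _) _ hb => q'; rewrite mem_iota add0n => /andP [_ hq'].
    exact: fsound hq'.
  case: Gb => t [ht hbt hpt].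
  have hpm : part p = ord_max by apply: val_inj.
  have hz : forall j : 'I_k, pair (Vcoll B j) (p + \sum_(x <- t) x) = 0.
    move=> j; rewrite pairD hpt mem_iota add0n ltn_ord mul1n vbE.
    have [_ h2 _] := amen j hp.
    by rewrite gez0_abs ?subrr // h2 // hpk.
  have eu : u = p + \sum_(x <- t) x.
    apply: (@inj_pairs u _ hB) => i; case: (splitP i) => j hj.
      have -> : i = lshift m j by apply: val_inj.
      by rewrite hz (h0 j).
    have -> : i = rshift k j by apply: val_inj.
    have := congr1 (fun M : V => M 0 j) hu.
    by rewrite !mxE hbt mxE add0r => ->; rewrite pairD addrC.
  exists p, t; split => //.
case=> p [s [hp hpm hs hu h0]]; split => //.
apply/(occursE _ posc_pullback)/exS_fnext; exists p; split => //; first by rewrite hpm.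
have hpk : (part p : nat) = k by rewrite hpm.
have hinv : forall j : 'I_k, pair (Vcoll B j) (\sum_(x <- s) x) =
    (count (fun x => x.1 == (j : nat)) ([::] : seq (nat * V)))%:Z - (`|pair (vb B j) p|%N)%:Z.
  move=> j; have := h0 j; rewrite hu pairD vbE.
  have [_ h2 _] := amen j hp.
  rewrite gez0_abs ?h2 ?hpk //=; lia.
have hF0 : forall x, x \in ([::] : seq (nat * V)) -> (x.1 < k)%N /\ A x.1 x.2 by [].
have [L [hL1 hL2 hL3]] := @forest s [::] (fun j => `|pair (vb B j) p|%N) hs hF0 hinv.
exists (xproj B (\sum_(x <- s) x)); split; last by rewrite hu xprojD add0r addrC.
rewrite size_fseq.
have hL : forall x, x \in L -> x.1 \in iota 0 k /\ A x.1 x.2.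
  by move=> x hx; have [h1 h2] := hL1 x hx; rewrite mem_iota add0n h1.
have := @SumS_list A (iota 0 k) L (iota_uniq 0 k) hL.
rewrite hL3 big_nil addr0; apply: SumS_ext => j hj; split => //.
by apply: hL2; move: hj; rewrite mem_iota add0n.
Qed.
End Spec.

Theorem proposition2p17 (R : realType) (k m : nat)
  (Sigma : seq (seq 'rV[int]_(k + m)))
  (rays : seq 'rV[int]_(k + m)) (part : 'rV[int]_(k + m) -> 'I_k.+1)
  (B : 'M[int]_(k + m)) :
  complete_fan R Sigma ->
  qnef_partition R Sigma rays part ->
  B \in unitmx ->
  amenable rays part (Vcoll B) ->
  forall u : 'rV[int]_(k + m),
    ((forall i : 'I_k, pair (Vcoll B i) u = 0) /\
     occurs (pullback_w B rays part) (xproj B u))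
    <->
    (exists p : 'rV[int]_(k + m), exists s : seq 'rV[int]_(k + m),
       [/\ p \in rays, part p = ord_max,
           all (fun x => (x \in rays) && (part x != ord_max)) s,
           u = p + \sum_(x <- s) x &
           forall i : 'I_k, pair (Vcoll B i) u = 0]).
Proof.
move=> _ _ hB amen u; exact: main_iff.
Qed.
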